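(* Let $(C,n)$ be a finite-dimensional composition algebra over a field $k$ of characteristic not $2$, with underlying vector space $V$. Then there exist a symmetric composition algebra $S$ with the same underlying quadratic space $(V,n)$ and isometries $f,g\in\mathrm{O}(n)$ such that $C=S_{f,g}$.
   Context: An algebra over $k$ is a $k$-vector space with a bilinear multiplication (not necessarily associative, commutative or unital). For a quadratic form $n$ on $V$, $b_n(x,y)=n(x+y)-n(x)-n(y)$ is its polar bilinear form, and $n$ is non-degenerate if $b_n$ has trivial radical. A composition algebra over $k$ is an algebra $C$ endowed with a non-degenerate quadratic form $n$ such that $n(xy)=n(x)n(y)$ for all $x,y\in C$. It is symmetric if $b_n(xy,z)=b_n(x,yz)$ for all $x,y,z$. $\mathrm{O}(n)$ is the group of linear isometries of $(V,n)$. For an algebra $A$ and linear maps $f,g$ on $A$, the isotope $A_{f,g}$ is the algebra with underlying space $A$ and multiplication $x\cdot y=f(x)g(y)$, where juxtaposition is the multiplication of $A$. *)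

(* Defs.v *)
From HB Require Import structures.
From mathcomp Require Import all_boot all_order all_algebra.
Set Implicit Arguments. Unset Strict Implicit. Unset Printing Implicit Defensive.
Import GRing.Theory.
Local Open Scope ring_scope.

Section Defs.
Variables (K : fieldType) (V : vectType K).

Definition polar (q : V -> K) (x y : V) : K := q (x + y) - q x - q y.

Definition bilinear_mul (m : V -> V -> V) : Prop :=
  (forall x, linear (m x)) /\ (forall y, linear (fun x => m x y)).

Definition quadratic_form (q : V -> K) : Prop :=
  (forall (a : K) x, q (a *: x) = a ^+ 2 * q x) /\
  (forall x, linear (polar q x : V -> K^o)) /\
  (forall y, linear ((fun x => polar q x y) : V -> K^o)).

Definition nondegenerate (q : V -> K) : Prop :=
  forall x, (forall y, polar q x y = 0) -> x = 0.

Definition composition_algebra (m : V -> V -> V) (q : V -> K) : Prop :=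
  [/\ bilinear_mul m, quadratic_form q, nondegenerate q &
      forall x y, q (m x y) = q x * q y].

Definition symmetric_composition_algebra (m : V -> V -> V) (q : V -> K) : Prop :=
  composition_algebra m q /\
  forall x y z, polar q (m x y) z = polar q x (m y z).

Definition in_orthogonal_group (q : V -> K) (f : V -> V) : Prop :=
  [/\ linear f, bijective f & forall x, q (f x) = q x].

Definition isotope (m : V -> V -> V) (f g : V -> V) : V -> V -> V :=
  fun x y => m (f x) (g y).

End Defs.

(* Main.v *)
Require Import Defs.
From HB Require Import structures.
From mathcomp Require Import all_boot all_order all_algebra.
From mathcomp Require Import ring.
From Stdlib Require Import FunctionalExtensionality Classical.
Set Implicit Arguments. Unset Strict Implicit. Unset Printing Implicit Defensive.
Import GRing.Theory.
Local Open Scope ring_scope.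

Section LinFacts.
Variables (K : fieldType) (U W : lmodType K) (f : U -> W).
Hypothesis Hf : linear f.
Let lf : {linear U -> W} := HB.pack f (GRing.isLinear.Build K U W *:%R f Hf).
Lemma lin0 : f 0 = 0. Proof. exact: (linear0 lf). Qed.
Lemma linD u v : f (u + v) = f u + f v. Proof. exact: (linearD lf). Qed.
Lemma linZ a u : f (a *: u) = a *: f u. Proof. by have := Hf a u 0; rewrite !addr0 lin0 addr0. Qed.
Lemma linN u : f (- u) = - f u. Proof. exact: (linearN lf). Qed.
Lemma linB u v : f (u - v) = f u - f v. Proof. exact: (linearB lf). Qed.
End LinFacts.

Lemma inj_lin_bij (K : fieldType) (V : vectType K) (f : V -> V) :
  linear f -> injective f -> exists g : V -> V, cancel f g /\ cancel g f /\ linear g.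
Proof.
move=> Hf inj.
pose lf : {linear V -> V} := HB.pack f (GRing.isLinear.Build K V V *:%R f Hf).
pose F : 'End(V) := linfun lf.
have k0 : lker F == 0%VS.
  by apply/lker0P => x y; rewrite !lfunE /=; apply: inj.
exists (F^-1%VF); split; last split.
- by move=> x; have := lker0_lfunK k0 x; rewrite lfunE.
- by move=> x; have := lker0_lfunVK k0 x; rewrite lfunE.
- by move=> a x y; rewrite linearP.
Qed.

Lemma lin_comp (K : fieldType) (V : vectType K) (f g : V -> V) :
  linear f -> linear g -> linear (fun x => f (g x)).
Proof. by move=> Hf Hg a u v; rewrite Hg Hf. Qed.

Section Comp.
Variables (K : fieldType) (V : vectType K) (q : V -> K).
Hypothesis Hq : quadratic_form q.
Notation b := (polar q).

Lemma bR x : linear (b x : V -> K^o). Proof. by case: Hq => _ []. Qed.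
Lemma bL y : linear ((fun x => b x y) : V -> K^o). Proof. by case: Hq => _ []. Qed.
Lemma bC x y : b x y = b y x. Proof. by rewrite /polar [y + x]addrC; ring. Qed.
Lemma qD x y : q (x + y) = q x + q y + b x y. Proof. by rewrite /polar; ring. Qed.
Lemma qZ a x : q (a *: x) = a ^+ 2 * q x. Proof. by case: Hq. Qed.
Lemma bZr a x y : b x (a *: y) = a * b x y. Proof. exact: (linZ (bR x)). Qed.
Lemma bZl a x y : b (a *: x) y = a * b x y. Proof. exact: (linZ (bL y)). Qed.
Lemma bDr x y z : b x (y + z) = b x y + b x z. Proof. exact: (linD (bR x)). Qed.
Lemma bDl x y z : b (x + y) z = b x z + b y z. Proof. exact: (linD (bL z)). Qed.
Lemma bNr x y : b x (- y) = - b x y. Proof. exact: (linN (bR x)). Qed.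
Lemma bNl x y : b (- x) y = - b x y. Proof. exact: (linN (bL y)). Qed.
Lemma b0l y : b 0 y = 0. Proof. exact: (lin0 (bL y)). Qed.
Lemma q0 : q 0 = 0. Proof. by rewrite -(scale0r (0 : V)) qZ expr2 !mul0r. Qed.
Lemma qN x : q (- x) = q x.
Proof. by rewrite -scaleN1r qZ expr2 mulN1r opprK mul1r. Qed.
Lemma bxx x : b x x = 2%:R * q x.
Proof. by rewrite /polar -mulr2n -scaler_nat qZ; ring. Qed.

Variable (m : V -> V -> V).
Hypothesis Hm : bilinear_mul m.
Hypothesis Hmq : forall x y, q (m x y) = q x * q y.

Lemma mR x : linear (m x). Proof. by case: Hm. Qed.
Lemma mL y : linear (fun x => m x y). Proof. by case: Hm. Qed.

Lemma P1 x1 x2 y : b (m x1 y) (m x2 y) = b x1 x2 * q y.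
Proof.
have := Hmq (x1 + x2) y.
rewrite (linD (mL y)) !qD !Hmq => h.
have -> : b (m x1 y) (m x2 y) =
  (q x1 * q y + q x2 * q y + b (m x1 y) (m x2 y)) - q x1 * q y - q x2 * q y by ring.
by rewrite h; ring.
Qed.

Lemma P2 x y1 y2 : b (m x y1) (m x y2) = q x * b y1 y2.
Proof.
have := Hmq x (y1 + y2).
rewrite (linD (mR x)) !qD !Hmq => h.
have -> : b (m x y1) (m x y2) =
  (q x * q y1 + q x * q y2 + b (m x y1) (m x y2)) - q x * q y1 - q x * q y2 by ring.
by rewrite h; ring.
Qed.

Lemma PC x1 x2 y1 y2 :
  b (m x1 y1) (m x2 y2) + b (m x1 y2) (m x2 y1) = b x1 x2 * b y1 y2.
Proof.
have := P1 x1 x2 (y1 + y2).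
rewrite (linD (mR x1)) (linD (mR x2)) !bDl !bDr !P1 qD => h.
rewrite [b (m x1 y2) (m x2 y1)]bC.
have E : b (m x1 y1) (m x2 y2) + b (m x2 y1) (m x1 y2) =
  (b x1 x2 * q y1 + b (m x1 y1) (m x2 y2) + (b (m x2 y1) (m x1 y2) + b x1 x2 * q y2))
   - b x1 x2 * q y1 - b x1 x2 * q y2.
  by rewrite [b (m x2 y1) _]bC; ring.
rewrite [b (m x1 y2) (m x2 y1)]bC in h.
by rewrite E h; ring.
Qed.

End Comp.

Section Hurwitz.
Variables (K : fieldType) (V : vectType K) (q : V -> K).
Hypothesis Hq : quadratic_form q.
Notation b := (polar q).
Variable (m : V -> V -> V).
Hypothesis Hm : bilinear_mul m.
Hypothesis Hmq : forall x y, q (m x y) = q x * q y.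
Variables (a : V) (Ri Li : V -> V).
Hypothesis Ha : q a = 1.
Hypotheses (HRi : cancel (fun x => m x a) Ri) (HiR : cancel Ri (fun x => m x a)).
Hypotheses (HLi : cancel (m a) Li) (HiL : cancel Li (m a)).
Hypotheses (Rlin : linear Ri) (Llin : linear Li).

Definition dd x y := m (Ri x) (Li y).
Definition ee := m a a.
Definition bar x := b x ee *: ee - x.
Definition ss x y := dd (bar x) (bar y).

Lemma qRi x : q (Ri x) = q x.
Proof. by rewrite -{2}(HiR x) Hmq Ha mulr1. Qed.
Lemma qLi x : q (Li x) = q x.
Proof. by rewrite -{2}(HiL x) Hmq Ha mul1r. Qed.
Lemma dq x y : q (dd x y) = q x * q y.
Proof. by rewrite /dd Hmq qRi qLi. Qed.
Lemma dbil : bilinear_mul dd.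
Proof.
split=> [x|y]; first exact: (lin_comp (mR Hm (Ri x)) Llin).
exact: (lin_comp (mL Hm (Li y)) Rlin).
Qed.
Lemma de_l y : dd ee y = y.
Proof. by rewrite /dd /ee HRi HiL. Qed.
Lemma de_r x : dd x ee = x.
Proof. by rewrite /dd /ee HLi HiR. Qed.
Lemma qe : q ee = 1.
Proof. by rewrite /ee Hmq Ha mulr1. Qed.
Lemma bee : b ee ee = 2%:R.
Proof. by rewrite bxx // qe mulr1. Qed.

Lemma H1 x y z : b (dd x y) z + b (dd x z) y = b x ee * b y z.
Proof. by have := PC Hq dbil dq x ee y z; rewrite !de_l. Qed.
Lemma H2 x y z : b (dd x y) z + b x (dd z y) = b y ee * b x z.
Proof. by have := PC Hq dbil dq x z y ee; rewrite !de_r mulrC. Qed.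

Lemma barlin : linear bar.
Proof.
move=> c u v; have E : b (c *: u + v) ee = c * b u ee + b v ee := bL Hq ee c u v.
by rewrite /bar E scalerDl -scalerA scalerBr opprD addrACA.
Qed.

Lemma bbar x : b (bar x) ee = b x ee.
Proof.
rewrite /bar (linB (bL Hq ee)) (linZ (bL Hq ee)) bee.
rewrite [_ *: _]/(GRing.scale _ _) /=.
ring.
Qed.

Lemma barbar x : bar (bar x) = x.
Proof. by rewrite {1}/bar bbar /bar opprB addrC subrK. Qed.

Lemma qbar x : q (bar x) = q x.
Proof.
rewrite /bar qD // qZ // qe qN // bNr // bZl // bC.
ring.
Qed.

Lemma A1 x y z : b (dd x y) z = b y (dd (bar x) z).
Proof.
have E : dd (bar x) z = b x ee *: z - dd x z.
  by rewrite /bar (linB (mL dbil z)) (linZ (mL dbil z)) de_l.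
rewrite E bDr // bNr // bZr //.
have := H1 x y z; rewrite [b (dd x z) y]bC // => h.
by rewrite -h; ring.
Qed.

Lemma A2 x y z : b (dd x y) z = b x (dd z (bar y)).
Proof.
have E : dd z (bar y) = b y ee *: z - dd z y.
  by rewrite /bar (linB (mR dbil z)) (linZ (mR dbil z)) de_r.
rewrite E bDr // bNr // bZr //.
have := H2 x y z => h.
by rewrite -h; ring.
Qed.

Lemma ss_sym x y z : b (ss x y) z = b x (ss y z).
Proof.
by rewrite /ss A1 (barbar x) [RHS]bC // A2 (barbar z).
Qed.

End Hurwitz.


Lemma inj_left (K : fieldType) (V : vectType K) (q : V -> K) (m : V -> V -> V) :
  quadratic_form q -> Defs.nondegenerate q -> bilinear_mul m ->
  (forall x y, q (m x y) = q x * q y) ->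
  forall c, q c != 0 -> injective (m c) /\ injective (fun x => m x c).
Proof.
move=> Hq Hnd Hm Hmq c hc; split=> u v huv; apply/eqP; rewrite -subr_eq0; apply/eqP;
  apply: Hnd => z.
- have := P2 Hm Hmq c (u - v) z.
  rewrite (linB (mR Hm c)) huv subrr b0l // => /esym /eqP; rewrite mulf_eq0 (negPf hc) /=.
  by move/eqP.
- have := P1 Hm Hmq (u - v) z c.
  rewrite (linB (mL Hm c)) /= huv subrr b0l // => /esym /eqP; rewrite mulf_eq0.
  by rewrite (negPf hc) orbF => /eqP.
Qed.

Theorem mainTheorem1 (K : fieldType) (V : vectType K)
  (m : V -> V -> V) (q : V -> K) :
  (2%:R : K) != 0 ->
  composition_algebra m q ->
  exists (s : V -> V -> V) (f g : V -> V),
    [/\ symmetric_composition_algebra s q,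
        in_orthogonal_group q f, in_orthogonal_group q g &
        m = isotope s f g].
Proof.
move=> _ [Hm Hq Hnd Hmq].
have HC : composition_algebra m q by split.
case: (classic (exists x, q x != 0)) => [[x0 hx0] | hnone].
- have [injL _] := inj_left Hq Hnd Hm Hmq hx0.
  have [g0 [_ [g0K _]]] := inj_lin_bij (mR Hm x0) injL.
  set a := g0 x0.
  have Ha : q a = 1.
    have := Hmq x0 a; rewrite /a g0K => h.
    by apply: (mulfI hx0); rewrite -h mulr1.
  have ha : q a != 0 by rewrite Ha oner_neq0.
  have [iL iR] := inj_left Hq Hnd Hm Hmq ha.
  have [Li [HLi [HiL Llin]]] := inj_lin_bij (mR Hm a) iL.
  have [Ri [HRi [HiR Rlin]]] := inj_lin_bij (mL Hm a) iR.
  exists (ss q m a Ri Li), (fun x => bar q m a (m x a)), (fun x => bar q m a (m a x)).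
  split.
  + split; last exact: (ss_sym Hq Hm Hmq Ha HRi HiR HLi HiL Rlin Llin).
    split=> //.
    * split=> [x|y].
        exact: (lin_comp (mR (dbil Hm Rlin Llin) (bar q m a x)) (barlin Hq m a)).
      exact: (lin_comp (mL (dbil Hm Rlin Llin) (bar q m a y)) (barlin Hq m a)).
    * by move=> x y; rewrite /ss (dq Hmq Ha HiR HiL) !(qbar Hq Hmq Ha).
  + split.
    * exact: (lin_comp (barlin Hq m a) (mL Hm a)).
    * exists (fun x => Ri (bar q m a x)) => x /=.
        by rewrite (barbar Hq Hmq Ha) HRi.
      by rewrite HiR (barbar Hq Hmq Ha).
    * by move=> x; rewrite (qbar Hq Hmq Ha) Hmq Ha mulr1.
  + split.
    * exact: (lin_comp (barlin Hq m a) (mR Hm a)).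
    * exists (fun x => Li (bar q m a x)) => x /=.
        by rewrite (barbar Hq Hmq Ha) HLi.
      by rewrite HiL (barbar Hq Hmq Ha).
    * by move=> x; rewrite (qbar Hq Hmq Ha) Hmq Ha mul1r.
  + apply: functional_extensionality => x; apply: functional_extensionality => y.
    by rewrite /isotope /ss /dd !(barbar Hq Hmq Ha) HRi HLi.
- have q0' : forall x, q x = 0.
    move=> x; apply/eqP; apply/negPn/negP => hx; apply: hnone; by exists x.
  have b0' : forall x y, polar q x y = 0 by move=> x y; rewrite /polar !q0' !subr0.
  have idO : in_orthogonal_group q id.
    by split=> //; exists id.
  exists m, id, id; split=> //.
  by split=> // x y z; rewrite !b0'.
Qed.
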